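(* Let $\mathcal A,\mathcal B$ be categories with equalizers and $(\mathcal T,(N_A,R_A),(N_B,R_B),\tau)$ a pre-torsor such that $\eta^A,\eta^B$ are regular natural monomorphisms and $N_A,N_B$ preserve equalizers. Then: (1) Let $(D,j)$ be the equalizer of $\theta^l:=(R_B\epsilon^AN_BR_BN_AR_AN_B)\circ(R_BN_A\tau)$ and $\theta^r:=\eta^BR_BN_AR_AN_B$ (both $R_BN_AR_AN_B\to R_BN_BR_BN_AR_AN_B$). There are unique $\Delta^D,\varepsilon^D$ with $(R_BN_AR_AN_Bj)\circ(jD)\circ\Delta^D=(R_BN_A\tau)\circ j$ and $\eta^B\circ\varepsilon^D=(R_B\epsilon^AN_B)\circ j$, making $\mathbb D=(D,\Delta^D,\varepsilon^D)$ a comonad on $\mathcal B$ whose functor $D$ preserves equalizers. (2) There is a natural transformation $\zeta:DR_B\to R_BN_AR_A$ such that $(\mathcal T,(N_B,R_B),(N_A,R_A),\mathbb D,\zeta)$ is an object of $\overline{\mathrm{RArr}}(\mathcal B,\mathcal A)$, i.e. $(R_B,\zeta)$ is a co-regular comonad arrow from $\mathbb D$ to the comonad $N_AR_A$. (3) For a morphism $F$ between two pre-torsors both satisfying the hypotheses, there is a unique comonad morphism $t:\mathbb D\to\mathbb D'$ between the comonads of (1) such that $(F,t)$ is a morphism in $\overline{\mathrm{RArr}}(\mathcal B,\mathcal A)$ between the objects of (2).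
   Context: Conventions: $\circ$ vertical composition, juxtaposition horizontal composition; a functor's name denotes its identity transformation. Units/counits $\eta^A,\epsilon^A,\eta^B,\epsilon^B$; $N_AR_A$ is a comonad on $\mathcal T$ with comultiplication $N_A\eta^AR_A$ and counit $\epsilon^A$. A regular natural monomorphism is the equalizer in the functor category of some pair of natural transformations. Pre-torsor: adjunctions $(N_A:\mathcal A\to\mathcal T,R_A)$, $(N_B:\mathcal B\to\mathcal T,R_B)$ and $\tau:R_AN_B\to R_AN_BR_BN_AR_AN_B$ with $(R_AN_BR_B\epsilon^AN_B)\circ\tau=R_AN_B\eta^B$, $(R_A\epsilon^BN_AR_AN_B)\circ\tau=\eta^AR_AN_B$, $(R_AN_BR_BN_A\tau)\circ\tau=(\tau R_BN_AR_AN_B)\circ\tau$. Morphisms of pre-torsors: functors $F:\mathcal T'\to\mathcal T$ with $R_AF=R'_A$, $R_BF=R'_B$, $(R_AbR_BaR_Ab)\circ\tau=\tau'\circ(R_Ab)$ where $a=(\epsilon^AFN'_A)\circ(N_A\eta'^A)$, $b=(\epsilon^BFN'_B)\circ(N_B\eta'^B)$. Comonad arrow from $\mathbb D$ (on $\mathcal B$) to $\mathbb C'=(C',\Delta',\varepsilon')$ (on $\mathcal T$): $(F:\mathcal T\to\mathcal B,\ \zeta:DF\to FC')$ with $(F\varepsilon')\circ\zeta=\varepsilon^DF$ and $(F\Delta')\circ\zeta=(\zeta C')\circ(D\zeta)\circ(\Delta^DF)$. For $F=R_B$ with left adjoint $N_B$, it is co-regular if $\bar\zeta:=(\epsilon^BN_AR_AN_B)\circ(N_B\zeta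 N_B)\circ(N_BD\eta^B):N_BD\to N_AR_AN_B$ is an isomorphism. $\overline{\mathrm{RArr}}(\mathcal B,\mathcal A)$ has objects $(\mathcal T,(N_B,R_B),(N_A,R_A),\mathbb D,\zeta)$ with $(R_B,\zeta)$ a co-regular comonad arrow from a comonad $\mathbb D$ on $\mathcal B$ to $N_AR_A$, and morphisms $(F,t)$ with $F:\mathcal T'\to\mathcal T$, $R_AF=R'_A$, $R_BF=R'_B$, and $t:\mathbb D\to\mathbb D'$ a comonad morphism with $(R_BaR'_A)\circ(\zeta F)=\zeta'\circ(tR'_B)$. *)

(* Defs.v *)
Unset Implicit Arguments.
Unset Strict Implicit.

Record Category := {
  Ob :> Type;
  Hom : Ob -> Ob -> Type;
  idm : forall a, Hom a a;
  cmp : forall {a b c}, Hom b c -> Hom a b -> Hom a c;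
  cmp_idl : forall a b (f : Hom a b), cmp (idm b) f = f;
  cmp_idr : forall a b (f : Hom a b), cmp f (idm a) = f;
  cmp_assoc : forall a b c d (h : Hom c d) (g : Hom b c) (f : Hom a b),
      cmp h (cmp g f) = cmp (cmp h g) f }.
Arguments Hom {_} _ _.
Arguments idm {_} _.
Arguments cmp {_ _ _ _} _ _.
Arguments cmp_assoc {_ _ _ _ _} _ _ _.

Notation "g ∘ f" := (cmp g f) (at level 40, left associativity).

Record Functor (C D : Category) := {
  fobj :> Ob C -> Ob D;
  fmap : forall {a b}, Hom a b -> Hom (fobj a) (fobj b);
  fmap_id : forall a, fmap (idm a) = idm (fobj a);
  fmap_cmp : forall a b c (g : Hom b c) (f : Hom a b),
      fmap (g ∘ f) = fmap g ∘ fmap f }.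
Arguments fmap {C D} _ {a b} _.

Definition Fid (C : Category) : Functor C C.
Proof.
  refine {| fobj := fun a => a; fmap := fun a b f => f |}; reflexivity.
Defined.

Definition Fcomp {C D E : Category} (G : Functor D E) (F : Functor C D) : Functor C E.
Proof.
  refine {| fobj := fun a => G (F a); fmap := fun a b f => fmap G (fmap F f) |}.
  - intros; rewrite !fmap_id; reflexivity.
  - intros; rewrite !fmap_cmp; reflexivity.
Defined.

(* A transformation is typed by the object maps only, so that composites of
   functors are definitionally associative in its type. Naturality is a
   separate predicate. *)
Definition Trans {C D : Category} (F G : Ob C -> Ob D) := forall a, Hom (F a) (G a).

Definition natural {C D : Category} (F G : Functor C D) (al : Trans F G) : Prop :=
  forall a b (f : Hom a b), fmap G f ∘ al a = al b ∘ fmap F f.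

Definition teq {C D : Category} {F G : Ob C -> Ob D} (al be : Trans F G) : Prop :=
  forall a, al a = be a.

Definition idT {C D : Category} (F : Ob C -> Ob D) : Trans F F := fun a => idm (F a).

Definition vcomp {C D : Category} {F G H : Ob C -> Ob D}
  (be : Trans G H) (al : Trans F G) : Trans F H := fun a => be a ∘ al a.

Definition lwhisk {C D E : Category} {F G : Ob C -> Ob D} (H : Functor D E)
  (al : Trans F G) : Trans (fun a => H (F a)) (fun a => H (G a)) :=
  fun a => fmap H (al a).

Definition rwhisk {C' C D : Category} {F G : Ob C -> Ob D} (al : Trans F G)
  (K : Ob C' -> Ob C) : Trans (fun a => F (K a)) (fun a => G (K a)) :=
  fun a => al (K a).

Definition hcomp {C D E : Category} {F F' : Ob C -> Ob D} (G : Functor D E)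
  {G' : Ob D -> Ob E} (be : Trans G G') (al : Trans F F')
  : Trans (fun a => G (F a)) (fun a => G' (F' a)) :=
  fun a => be (F' a) ∘ fmap G (al a).

Definition is_iso {C : Category} {a b : C} (f : Hom a b) : Prop :=
  exists g : Hom b a, g ∘ f = idm a /\ f ∘ g = idm b.

Record Adjunction {C D : Category} (N : Functor C D) (R : Functor D C) := {
  unit : Trans (fun a : Ob C => a) (fun a => R (N a));
  counit : Trans (fun x : Ob D => N (R x)) (fun x => x);
  unit_nat : natural (Fid C) (Fcomp R N) unit;
  counit_nat : natural (Fcomp N R) (Fid D) counit;
  adj_tri1 : forall a, counit (N a) ∘ fmap N (unit a) = idm (N a);
  adj_tri2 : forall x, fmap R (counit x) ∘ unit (R x) = idm (R x) }.
Arguments unit {C D N R} _ _.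
Arguments counit {C D N R} _ _.

Definition is_equalizer {C : Category} {a b e : C} (f g : Hom a b) (m : Hom e a) : Prop :=
  f ∘ m = g ∘ m /\
  forall z (h : Hom z a), f ∘ h = g ∘ h ->
    exists u : Hom z e, m ∘ u = h /\ forall u' : Hom z e, m ∘ u' = h -> u' = u.

Definition has_equalizers (C : Category) : Prop :=
  forall (a b : C) (f g : Hom a b), exists (e : C) (m : Hom e a), is_equalizer f g m.

Definition preserves_equalizers {C D : Category} (F : Functor C D) : Prop :=
  forall (a b e : C) (f g : Hom a b) (m : Hom e a),
    is_equalizer f g m -> is_equalizer (fmap F f) (fmap F g) (fmap F m).

Definition is_nat_equalizer {C D : Category} (E X Y : Functor C D)
  (s1 s2 : Trans X Y) (m : Trans E X) : Prop :=
  natural E X m /\ teq (vcomp s1 m) (vcomp s2 m) /\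
  forall (Z : Functor C D) (h : Trans Z X), natural Z X h ->
    teq (vcomp s1 h) (vcomp s2 h) ->
    exists u : Trans Z E, natural Z E u /\ teq (vcomp m u) h /\
      forall u' : Trans Z E, natural Z E u' -> teq (vcomp m u') h -> teq u' u.

Definition regular_nat_mono {C D : Category} (E X : Functor C D) (m : Trans E X) : Prop :=
  exists (Y : Functor C D) (s1 s2 : Trans X Y),
    natural X Y s1 /\ natural X Y s2 /\ is_nat_equalizer E X Y s1 s2 m.

Definition is_comonad {C : Category} (D : Functor C C)
  (De : Trans D (fun a => D (D a))) (ep : Trans D (fun a => a)) : Prop :=
  natural D (Fcomp D D) De /\ natural D (Fid C) ep /\
  teq (vcomp (lwhisk D ep) De) (idT D) /\
  teq (vcomp (rwhisk ep D) De) (idT D) /\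
  teq (vcomp (lwhisk D De) De) (vcomp (rwhisk De D) De).

Definition comonad_morphism {C : Category} (D D' : Functor C C)
  (De : Trans D (fun a => D (D a))) (ep : Trans D (fun a => a))
  (De' : Trans D' (fun a => D' (D' a))) (ep' : Trans D' (fun a => a))
  (t : Trans D D') : Prop :=
  natural D D' t /\
  teq (vcomp De' t) (vcomp (hcomp D t t) De) /\
  teq (vcomp ep' t) ep.

Definition comonad_arrow {B T : Category} (D : Functor B B)
  (De : Trans D (fun a => D (D a))) (ep : Trans D (fun a => a))
  (F : Functor T B) (C' : Functor T T)
  (De' : Trans C' (fun x => C' (C' x))) (ep' : Trans C' (fun x => x))
  (ze : Trans (fun x => D (F x)) (fun x => F (C' x))) : Prop :=
  natural (Fcomp D F) (Fcomp F C') ze /\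
  teq (vcomp (lwhisk F ep') ze) (rwhisk ep F) /\
  teq (vcomp (lwhisk F De') ze)
      (vcomp (rwhisk ze C') (vcomp (lwhisk D ze) (rwhisk De F))).

Section Paper.
Context {A B T : Category} (NA : Functor A T) (RA : Functor T A)
        (NB : Functor B T) (RB : Functor T B)
        (adjA : Adjunction NA RA) (adjB : Adjunction NB RB).

Definition tauType :=
  Trans (fun b => RA (NB b)) (fun b => RA (NB (RB (NA (RA (NB b)))))).

Definition is_pretorsor (tau : tauType) : Prop :=
  natural (Fcomp RA NB) (Fcomp RA (Fcomp NB (Fcomp RB (Fcomp NA (Fcomp RA NB))))) tau /\
  teq (vcomp (lwhisk (Fcomp RA (Fcomp NB RB)) (rwhisk (counit adjA) NB)) tau)
      (lwhisk (Fcomp RA NB) (unit adjB)) /\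
  teq (vcomp (lwhisk RA (rwhisk (counit adjB) (fun b => NA (RA (NB b))))) tau)
      (rwhisk (unit adjA) (fun b => RA (NB b))) /\
  teq (vcomp (lwhisk (Fcomp RA (Fcomp NB (Fcomp RB NA))) tau) tau)
      (vcomp (rwhisk tau (fun b => RB (NA (RA (NB b))))) tau).

Definition torsor_hyps (tau : tauType) : Prop :=
  is_pretorsor tau /\
  regular_nat_mono (Fid A) (Fcomp RA NA) (unit adjA) /\
  regular_nat_mono (Fid B) (Fcomp RB NB) (unit adjB) /\
  preserves_equalizers NA /\ preserves_equalizers NB.

Definition RNRN : Functor B B := Fcomp RB (Fcomp NA (Fcomp RA NB)).
Definition RNRNRN : Functor B B :=
  Fcomp RB (Fcomp NB (Fcomp RB (Fcomp NA (Fcomp RA NB)))).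

Definition theta_l (tau : tauType) : Trans RNRN RNRNRN :=
  vcomp (lwhisk RB (rwhisk (counit adjA) (fun b => NB (RB (NA (RA (NB b)))))))
        (lwhisk RB (lwhisk NA tau)).

Definition theta_r : Trans RNRN RNRNRN :=
  rwhisk (unit adjB) (fun b => RB (NA (RA (NB b)))).

Definition Delta_eq (tau : tauType) (D : Functor B B)
  (j : Trans D (fun b => RB (NA (RA (NB b)))))
  (De : Trans D (fun b => D (D b))) : Prop :=
  teq (vcomp (lwhisk RNRN j) (vcomp (rwhisk j D) De))
      (vcomp (lwhisk RB (lwhisk NA tau)) j).

Definition eps_eq (D : Functor B B)
  (j : Trans D (fun b => RB (NA (RA (NB b)))))
  (ep : Trans D (fun b => b)) : Prop :=
  teq (vcomp (unit adjB) ep) (vcomp (lwhisk RB (rwhisk (counit adjA) NB)) j).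

Definition NR_Delta : Trans (fun x => NA (RA x)) (fun x => NA (RA (NA (RA x)))) :=
  lwhisk NA (rwhisk (unit adjA) RA).

Definition zeta_can (D : Functor B B) (j : Trans D (fun b => RB (NA (RA (NB b)))))
  : Trans (fun x => D (RB x)) (fun x => RB (NA (RA x))) :=
  vcomp (lwhisk (Fcomp RB (Fcomp NA RA)) (counit adjB)) (rwhisk j RB).

Definition zeta_bar (D : Functor B B)
  (ze : Trans (fun x => D (RB x)) (fun x => RB (NA (RA x))))
  : Trans (fun b => NB (D b)) (fun b => NA (RA (NB b))) :=
  vcomp (rwhisk (counit adjB) (fun b => NA (RA (NB b))))
        (vcomp (lwhisk NB (rwhisk ze NB)) (lwhisk NB (lwhisk D (unit adjB)))).

(* (R_B, ze) is a co-regular comonad arrow from (D,De,ep) to N_A R_A;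
   i.e. (T,(N_B,R_B),(N_A,R_A),D,ze) is an object of RArr-bar(B,A) *)
Definition coregular_comonad_arrow (D : Functor B B)
  (De : Trans D (fun b => D (D b))) (ep : Trans D (fun b => b))
  (ze : Trans (fun x => D (RB x)) (fun x => RB (NA (RA x)))) : Prop :=
  is_comonad D De ep /\
  comonad_arrow D De ep RB (Fcomp NA RA) NR_Delta (counit adjA) ze /\
  (forall b, is_iso (zeta_bar D ze b)).

End Paper.

(* The second pre-torsor lives on T' and its right adjoints are R_A F and R_B F
   (the strict equalities R_A F = R'_A, R_B F = R'_B are built in). *)
Section Morphisms.
Context {A B T T' : Category} (F : Functor T' T)
        (NA : Functor A T) (RA : Functor T A) (NB : Functor B T) (RB : Functor T B)
        (adjA : Adjunction NA RA) (adjB : Adjunction NB RB)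
        (NA' : Functor A T') (NB' : Functor B T')
        (adjA' : Adjunction NA' (Fcomp RA F)) (adjB' : Adjunction NB' (Fcomp RB F)).

Definition mor_a : Trans NA (fun x => F (NA' x)) :=
  vcomp (rwhisk (counit adjA) (fun x => F (NA' x))) (lwhisk NA (unit adjA')).

Definition mor_b : Trans NB (fun x => F (NB' x)) :=
  vcomp (rwhisk (counit adjB) (fun x => F (NB' x))) (lwhisk NB (unit adjB')).

Definition pretorsor_morphism (tau : tauType NA RA NB RB)
  (tau' : tauType NA' (Fcomp RA F) NB' (Fcomp RB F)) : Prop :=
  teq (vcomp (lwhisk RA (hcomp NB mor_b (lwhisk RB (hcomp NA mor_a (lwhisk RA mor_b))))) tau)
      (vcomp tau' (lwhisk RA mor_b)).

Definition rarr_compat (D D' : Functor B B)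
  (ze : Trans (fun x => D (RB x)) (fun x => RB (NA (RA x))))
  (ze' : Trans (fun y => D' (RB (F y))) (fun y => RB (F (NA' (RA (F y))))))
  (t : Trans D D') : Prop :=
  teq (vcomp (lwhisk RB (rwhisk mor_a (fun y => RA (F y)))) (rwhisk ze F))
      (vcomp ze' (rwhisk t (fun y => RB (F y)))).

End Morphisms.

(* Main.v *)
Require Import Defs.
From Stdlib Require Import Setoid IndefiniteDescription.

Ltac norm := cbn [Fcomp Fid fobj fmap]; rewrite ?fmap_cmp, ?fmap_id, ?cmp_assoc, ?cmp_idl, ?cmp_idr.
Ltac norm_in H := cbn [Fcomp Fid fobj fmap] in H; rewrite ?fmap_cmp, ?fmap_id, ?cmp_assoc, ?cmp_idl, ?cmp_idr in H.

Ltac rw_core H :=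
  first [ rewrite H
        | let T0 := type of H in
          let T := eval cbv beta in T0 in
          match T with @eq (@Hom ?C ?a ?b) ?L ?R =>
            let H' := fresh "Hl" in
            let x := fresh "x" in let X := fresh "X" in
            assert (H' : forall x (X : @Hom C b x), X ∘ L = X ∘ R)
              by (intros x X; exact (f_equal (fun m => X ∘ m) H));
            repeat setoid_rewrite cmp_assoc in H';
            rewrite H'; clear H'
          end ].
Ltac rw H := let H0 := fresh "H0" in pose proof H as H0; cbn [Fcomp Fid fobj fmap] in H0;
  rw_core H0; clear H0.
Ltac rwl H := rw (eq_sym H).

Definition mono {C : Category} {a b : C} (m : Hom a b) : Prop :=
  forall z (p q : Hom z a), m ∘ p = m ∘ q -> p = q.

Lemma eq_mono {C : Category} {a b e : C} (f g : Hom a b) (m : Hom e a) :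
  is_equalizer f g m -> mono m.
Proof.
  intros [Hfg Hu] z p q Hpq.
  assert (E : f ∘ (m ∘ p) = g ∘ (m ∘ p)) by (rewrite !cmp_assoc, Hfg; reflexivity).
  destruct (Hu z (m ∘ p) E) as [u [_ Huu]].
  rewrite (Huu p eq_refl), (Huu q (eq_sym Hpq)); reflexivity.
Qed.

Lemma mono_cmp {C : Category} {a b c : C} (f : Hom b c) (g : Hom a b) :
  mono f -> mono g -> mono (f ∘ g).
Proof.
  intros Hf Hg z p q H. apply Hg, Hf. rewrite !cmp_assoc. exact H.
Qed.

Lemma eq_factor {C : Category} {a b e z : C} (f g : Hom a b) (m : Hom e a) (h : Hom z a) :
  is_equalizer f g m -> f ∘ h = g ∘ h -> { u : Hom z e | m ∘ u = h }.
Proof.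
  intros [Hfg Hu] Hh. apply constructive_indefinite_description.
  destruct (Hu z h Hh) as [u [Hu1 _]]. exists u; exact Hu1.
Qed.

Lemma mono_fmap_eq {C D : Category} (F : Functor C D) {a b e : C} (f g : Hom a b) (m : Hom e a) :
  preserves_equalizers F -> is_equalizer f g m -> mono (fmap F m).
Proof. intros HF He. exact (eq_mono _ _ _ (HF _ _ _ _ _ _ He)). Qed.

Lemma pres_comp {C D E : Category} (G : Functor D E) (F : Functor C D) :
  preserves_equalizers G -> preserves_equalizers F -> preserves_equalizers (Fcomp G F).
Proof. intros HG HF a b e f g m He. exact (HG _ _ _ _ _ _ (HF _ _ _ _ _ _ He)). Qed.

Section Adj.
Context {C D : Category} {N : Functor C D} {R : Functor D C} (adj : Adjunction N R).
Lemma unitN a b (f : Hom a b) : fmap R (fmap N f) ∘ unit adj a = unit adj b ∘ f.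
Proof. exact (unit_nat _ _ adj a b f). Qed.
Lemma counitN x y (f : Hom x y) : f ∘ counit adj x = counit adj y ∘ fmap N (fmap R f).
Proof. exact (counit_nat _ _ adj x y f). Qed.
Lemma tri1 a : counit adj (N a) ∘ fmap N (unit adj a) = idm (N a).
Proof. exact (adj_tri1 _ _ adj a). Qed.
Lemma tri2 x : fmap R (counit adj x) ∘ unit adj (R x) = idm (R x).
Proof. exact (adj_tri2 _ _ adj x). Qed.

Lemma radj_pres : preserves_equalizers R.
Proof.
  intros a b e f g m [Hfg Hu]. split.
  - rewrite <- !fmap_cmp, Hfg; reflexivity.
  - intros z h Hh.
    set (hh := counit adj a ∘ fmap N h).
    assert (E : f ∘ hh = g ∘ hh).
    { unfold hh. rewrite !cmp_assoc, !counitN. rewrite <- !cmp_assoc, <- !fmap_cmp, Hh. reflexivity. }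
    destruct (Hu _ hh E) as [u [Hmu Huu]].
    exists (fmap R u ∘ unit adj z). split.
    + rewrite cmp_assoc, <- fmap_cmp, Hmu. unfold hh. rewrite fmap_cmp, <- cmp_assoc, unitN.
      rewrite cmp_assoc, tri2, cmp_idl. reflexivity.
    + intros u' Hu'.
      assert (E2 : counit adj e ∘ fmap N u' = u).
      { apply Huu. rewrite cmp_assoc, counitN, <- cmp_assoc, <- fmap_cmp, Hu'. reflexivity. }
      rewrite <- E2, fmap_cmp, <- cmp_assoc, unitN, cmp_assoc, tri2, cmp_idl. reflexivity.
Qed.
End Adj.

Ltac rwF H := let H' := fresh "HF" in pose proof H as H'; norm_in H'; rw H'; clear H'.
Ltac rwlF H := rwF (eq_sym H).
Ltac unf := unfold teq, vcomp, lwhisk, rwhisk, hcomp, idT, natural in *; cbn [Fcomp Fid fobj fmap] in *.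

Section PW.
Context {C D : Category} (E X Y : Functor C D) (s1 s2 : Trans X Y) (m : Trans E X).
Hypothesis HD : has_equalizers D.
Hypothesis Hs1 : natural X Y s1.
Hypothesis Hs2 : natural X Y s2.
Hypothesis Hm : is_nat_equalizer E X Y s1 s2 m.

Definition pick (c : C) : {e : D & {mm : Hom e (X c) | is_equalizer (s1 c) (s2 c) mm}}.
Proof.
  destruct (constructive_indefinite_description _ (HD _ _ (s1 c) (s2 c))) as [e He].
  destruct (constructive_indefinite_description _ He) as [mm Hmm].
  exact (existT _ e (exist _ mm Hmm)).
Defined.
Definition Eo c : D := projT1 (pick c).
Definition mo c : Hom (Eo c) (X c) := proj1_sig (projT2 (pick c)).
Lemma mo_eq c : is_equalizer (s1 c) (s2 c) (mo c).
Proof. exact (proj2_sig (projT2 (pick c))). Qed.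

Lemma Ef_ok a b (f : Hom a b) : s1 b ∘ (fmap X f ∘ mo a) = s2 b ∘ (fmap X f ∘ mo a).
Proof.
  rewrite !cmp_assoc. rewrite <- (Hs1 a b f), <- (Hs2 a b f).
  rewrite <- !cmp_assoc. destruct (mo_eq a) as [H _]. rewrite H. reflexivity.
Qed.
Definition Ef a b (f : Hom a b) : Hom (Eo a) (Eo b) :=
  proj1_sig (eq_factor _ _ _ _ (mo_eq b) (Ef_ok a b f)).
Lemma Ef_spec a b (f : Hom a b) : mo b ∘ Ef a b f = fmap X f ∘ mo a.
Proof. exact (proj2_sig (eq_factor _ _ _ _ (mo_eq b) (Ef_ok a b f))). Qed.

Definition EF : Functor C D.
Proof.
  refine {| fobj := Eo; fmap := Ef |}.
  - intros a. apply (eq_mono _ _ _ (mo_eq a)). rewrite Ef_spec, fmap_id, cmp_idl, cmp_idr. reflexivity.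
  - intros a b c g f. apply (eq_mono _ _ _ (mo_eq c)).
    rewrite Ef_spec, cmp_assoc, Ef_spec, <- cmp_assoc, Ef_spec, cmp_assoc, fmap_cmp. reflexivity.
Defined.

Lemma nat_eq_pointwise c : is_equalizer (s1 c) (s2 c) (m c).
Proof.
  destruct Hm as [Hmn [Hmeq Hmu]].
  destruct (Hmu EF mo) as [u [Hun [Hu1 _]]].
  { intros a b f. cbn. symmetry. apply Ef_spec. }
  { intros a. apply (mo_eq a). }
  assert (Hu1' : forall a, m a ∘ u a = mo a) by exact Hu1. clear Hu1. rename Hu1' into Hu1.
  assert (Hv : forall a, { v : Hom (E a) (Eo a) | mo a ∘ v = m a }).
  { intros a. apply (eq_factor _ _ _ _ (mo_eq a)). apply Hmeq. }
  set (v := fun a => proj1_sig (Hv a)).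
  assert (Hvs : forall a, mo a ∘ v a = m a) by (intros a; exact (proj2_sig (Hv a))).
  assert (Hvn : natural E EF v).
  { intros a b f. apply (eq_mono _ _ _ (mo_eq b)). cbn.
    rewrite cmp_assoc, Ef_spec, <- cmp_assoc, Hvs, cmp_assoc, Hvs. apply Hmn. }
  assert (Huv : forall a, u a ∘ v a = idm (E a)).
  { destruct (Hmu E m Hmn Hmeq) as [w [_ [_ Hw]]].
    assert (H1 : teq (vcomp u v) w).
    { apply Hw.
      - intros a b f. unfold vcomp. rewrite cmp_assoc, Hun, <- cmp_assoc, Hvn, cmp_assoc. reflexivity.
      - intros a. unfold vcomp. rewrite cmp_assoc, Hu1. apply Hvs. }
    assert (H2 : teq (idT E) w).
    { apply Hw.
      - intros a b f. unfold idT. rewrite cmp_idl, cmp_idr. reflexivity.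
      - intros a. unfold vcomp, idT. apply cmp_idr. }
    intros a. exact (eq_trans (H1 a) (eq_sym (H2 a))). }
  split.
  - apply Hmeq.
  - intros z h Hh. destruct (mo_eq c) as [_ Hc].
    destruct (Hc z h Hh) as [w [Hw _]].
    exists (u c ∘ w). split.
    + rewrite cmp_assoc, Hu1. exact Hw.
    + intros u' Hu'.
      assert (Mm : mono (m c)).
      { intros z' p q Hpq. rewrite <- (cmp_idl _ _ _ p), <- (cmp_idl _ _ _ q), <- (Huv c), <- !cmp_assoc.
        f_equal. apply (eq_mono _ _ _ (mo_eq c)). rewrite !cmp_assoc, Hvs. exact Hpq. }
      apply Mm. rewrite Hu', cmp_assoc, Hu1. symmetry. exact Hw.
Qed.
End PW.

Lemma unit_canon {C D : Category} {N : Functor C D} {R : Functor D C} (adj : Adjunction N R) :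
  has_equalizers C -> regular_nat_mono (Fid C) (Fcomp R N) (unit adj) ->
  forall c, is_equalizer (unit adj (R (N c))) (fmap R (fmap N (unit adj c))) (unit adj c).
Proof.
  intros HC [Y [s1 [s2 [H1 [H2 He]]]]].
  assert (Hp : forall c, is_equalizer (s1 c) (s2 c) (unit adj c)).
  { intros c. exact (nat_eq_pointwise (Fid C) (Fcomp R N) Y s1 s2 (unit adj) HC H1 H2 He c). }
  intros c. cbn [Fcomp Fid fobj fmap] in *. split.
  - symmetry. apply (unitN adj).
  - intros z h Hh. destruct (Hp c) as [Hs Hu]. apply Hu.
    apply (eq_mono _ _ _ (Hp (Y c))).
    rewrite !cmp_assoc. rewrite <- !(unitN adj).
    rewrite <- !cmp_assoc. rewrite Hh.
    rewrite !cmp_assoc.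
    assert (E : fmap R (fmap N (s1 c)) ∘ fmap R (fmap N (unit adj c)) = fmap R (fmap N (s2 c)) ∘ fmap R (fmap N (unit adj c)))
      by (rewrite <- !fmap_cmp; f_equal; f_equal; exact Hs).
    rewrite E. reflexivity.
Qed.

Section Main.
Context {A B T : Category} (NA : Functor A T) (RA : Functor T A) (NB : Functor B T) (RB : Functor T B)
  (adjA : Adjunction NA RA) (adjB : Adjunction NB RB) (tau : tauType NA RA NB RB).
Hypothesis HB : has_equalizers B.
Hypothesis Htau : is_pretorsor NA RA NB RB adjA adjB tau.
Hypothesis HregB : regular_nat_mono (Fid B) (Fcomp RB NB) (unit adjB).
Hypothesis HNA : preserves_equalizers NA.
Hypothesis HNB : preserves_equalizers NB.
Context (D : Functor B B) (j : Trans D (fun b => RB (NA (RA (NB b))))).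
Hypothesis Hj : is_nat_equalizer D (RNRN NA RA NB RB) (RNRNRN NA RA NB RB)
         (theta_l NA RA NB RB adjA tau) (theta_r NA RA NB RB adjB) j.

Local Notation hA := (unit adjA).
Local Notation eA := (counit adjA).
Local Notation hB := (unit adjB).
Local Notation eB := (counit adjB).

Lemma tau_nat a b (f : Hom a b) :
  fmap RA (fmap NB (fmap RB (fmap NA (fmap RA (fmap NB f))))) ∘ tau a = tau b ∘ fmap RA (fmap NB f).
Proof. destruct Htau as [H _]. exact (H a b f). Qed.
Lemma P1 b : fmap RA (fmap NB (fmap RB (eA (NB b)))) ∘ tau b = fmap RA (fmap NB (hB b)).
Proof. destruct Htau as [_ [H _]]. exact (H b). Qed.
Lemma P2 b : fmap RA (eB (NA (RA (NB b)))) ∘ tau b = hA (RA (NB b)).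
Proof. destruct Htau as [_ [_ [H _]]]. exact (H b). Qed.
Lemma P3 b : fmap RA (fmap NB (fmap RB (fmap NA (tau b)))) ∘ tau b = tau (RB (NA (RA (NB b)))) ∘ tau b.
Proof. destruct Htau as [_ [_ [_ H]]]. exact (H b). Qed.

Definition thl b := fmap RB (eA (NB (RB (NA (RA (NB b)))))) ∘ fmap RB (fmap NA (tau b)).

Lemma thl_nat a b (f : Hom a b) :
  fmap RB (fmap NB (fmap RB (fmap NA (fmap RA (fmap NB f))))) ∘ thl a
  = thl b ∘ fmap RB (fmap NA (fmap RA (fmap NB f))).
Proof.
  unfold thl. norm.
  rwF (f_equal (fmap RB) (counitN adjA _ _ (fmap NB (fmap RB (fmap NA (fmap RA (fmap NB f))))))).
  rwF (f_equal (fmap RB) (f_equal (fmap NA) (tau_nat a b f))). reflexivity.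
Qed.

Lemma j_nat a b (f : Hom a b) : fmap RB (fmap NA (fmap RA (fmap NB f))) ∘ j a = j b ∘ fmap D f.
Proof. destruct Hj as [H _]. exact (H a b f). Qed.

Lemma j_eq b : is_equalizer (thl b) (hB (RB (NA (RA (NB b))))) (j b).
Proof.
  refine (nat_eq_pointwise D (RNRN NA RA NB RB) (RNRNRN NA RA NB RB) _ _ j HB _ _ Hj b).
  - intros a c f. unfold theta_l, vcomp, lwhisk, rwhisk. cbn [RNRNRN RNRN Fcomp fmap fobj].
    exact (thl_nat a c f).
  - intros a c f. unfold theta_r, rwhisk. cbn [RNRNRN RNRN Fcomp fmap fobj].
    exact (unitN adjB _ _ _).
Qed.

Lemma HRA : preserves_equalizers RA. Proof. exact (radj_pres adjA). Qed.
Lemma HRB : preserves_equalizers RB. Proof. exact (radj_pres adjB). Qed.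

Lemma pres4 (a b e : B) (f g : Hom a b) (m : Hom e a) : is_equalizer f g m ->
  is_equalizer (fmap RB (fmap NA (fmap RA (fmap NB f)))) (fmap RB (fmap NA (fmap RA (fmap NB g))))
               (fmap RB (fmap NA (fmap RA (fmap NB m)))).
Proof. intros H. apply HRB, HNA, HRA, HNB, H. Qed.
Lemma pres6 (a b e : B) (f g : Hom a b) (m : Hom e a) : is_equalizer f g m ->
  is_equalizer (fmap RB (fmap NB (fmap RB (fmap NA (fmap RA (fmap NB f))))))
               (fmap RB (fmap NB (fmap RB (fmap NA (fmap RA (fmap NB g))))))
               (fmap RB (fmap NB (fmap RB (fmap NA (fmap RA (fmap NB m)))))).
Proof. intros H. apply HRB, HNB, HRB, HNA, HRA, HNB, H. Qed.
Lemma pres2 (a b e : B) (f g : Hom a b) (m : Hom e a) : is_equalizer f g m ->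
  is_equalizer (fmap RB (fmap NB f)) (fmap RB (fmap NB g)) (fmap RB (fmap NB m)).
Proof. intros H. apply HRB, HNB, H. Qed.

Lemma hB_eq b : is_equalizer (hB (RB (NB b))) (fmap RB (fmap NB (hB b))) (hB b).
Proof. exact (unit_canon adjB HB HregB b). Qed.
Lemma hB_mono b : mono (hB b). Proof. exact (eq_mono _ _ _ (hB_eq b)). Qed.
Lemma j_mono b : mono (j b). Proof. exact (eq_mono _ _ _ (j_eq b)). Qed.
Lemma j4_mono b : mono (fmap RB (fmap NA (fmap RA (fmap NB (j b))))).
Proof. exact (eq_mono _ _ _ (pres4 _ _ _ _ _ _ (j_eq b))). Qed.
Lemma j6_mono b : mono (fmap RB (fmap NB (fmap RB (fmap NA (fmap RA (fmap NB (j b))))))).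
Proof. exact (eq_mono _ _ _ (pres6 _ _ _ _ _ _ (j_eq b))). Qed.
Lemma j2_mono b : mono (fmap RB (fmap NB (j b))).
Proof. exact (eq_mono _ _ _ (pres2 _ _ _ _ _ _ (j_eq b))). Qed.
Lemma hB4_mono b : mono (fmap RB (fmap NA (fmap RA (fmap NB (hB b))))).
Proof. exact (eq_mono _ _ _ (pres4 _ _ _ _ _ _ (hB_eq b))). Qed.

Lemma G2key b :
  fmap RA (fmap NB (fmap RB (eA (NB (RB (NA (RA (NB b)))))))) ∘ fmap RA (fmap NB (fmap RB (fmap NA (tau b)))) ∘ tau b
  = fmap RA (fmap NB (hB (RB (NA (RA (NB b)))))) ∘ tau b.
Proof. rw (P3 b). rw (P1 (RB (NA (RA (NB b))))). reflexivity. Qed.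

Lemma step1 b :
  fmap RB (fmap NA (fmap RA (fmap NB (thl b)))) ∘ (fmap RB (fmap NA (tau b)) ∘ j b)
  = fmap RB (fmap NA (fmap RA (fmap NB (hB (RB (NA (RA (NB b)))))))) ∘ (fmap RB (fmap NA (tau b)) ∘ j b).
Proof.
  unfold thl. norm. rwF (f_equal (fmap RB) (f_equal (fmap NA) (G2key b))). reflexivity.
Qed.

Definition u1s b := eq_factor _ _ _ _ (pres4 _ _ _ _ _ _ (j_eq b)) (step1 b).
Definition u1 b := proj1_sig (u1s b).
Lemma u1_spec b : fmap RB (fmap NA (fmap RA (fmap NB (j b)))) ∘ u1 b = fmap RB (fmap NA (tau b)) ∘ j b.
Proof. exact (proj2_sig (u1s b)). Qed.

Lemma step2key b :
  thl (RB (NA (RA (NB b)))) ∘ fmap RB (fmap NA (tau b))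
  = fmap RB (fmap NB (fmap RB (fmap NA (tau b)))) ∘ thl b.
Proof.
  unfold thl. norm.
  rwlF (f_equal (fmap RB) (f_equal (fmap NA) (P3 b))).
  rwlF (f_equal (fmap RB) (counitN adjA _ _ (fmap NB (fmap RB (fmap NA (tau b)))))).
  reflexivity.
Qed.

Lemma step2 b : thl (D b) ∘ u1 b = hB (RB (NA (RA (NB (D b))))) ∘ u1 b.
Proof.
  apply j6_mono. rewrite !cmp_assoc.
  rewrite thl_nat. rewrite (unitN adjB _ _ (fmap RB (fmap NA (fmap RA (fmap NB (j b)))))).
  rewrite <- !cmp_assoc, !u1_spec.
  rewrite cmp_assoc, step2key, <- !cmp_assoc.
  destruct (j_eq b) as [Hjb _]. rewrite Hjb, !cmp_assoc.
  rewrite (unitN adjB _ _ (fmap RB (fmap NA (tau b)))). reflexivity.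
Qed.

Definition Dels b := eq_factor _ _ _ _ (j_eq (D b)) (step2 b).
Definition Del b : Hom (D b) (D (D b)) := proj1_sig (Dels b).
Lemma Del_spec b : j (D b) ∘ Del b = u1 b.
Proof. exact (proj2_sig (Dels b)). Qed.

Lemma Del_eq b : fmap RB (fmap NA (fmap RA (fmap NB (j b)))) ∘ (j (D b) ∘ Del b) = fmap RB (fmap NA (tau b)) ∘ j b.
Proof. rewrite Del_spec. apply u1_spec. Qed.

Lemma m_mono b : mono (fmap RB (fmap NA (fmap RA (fmap NB (j b)))) ∘ j (D b)).
Proof. apply mono_cmp; [apply j4_mono | apply j_mono]. Qed.


Lemma Del_eqL b : fmap RB (fmap NA (fmap RA (fmap NB (j b)))) ∘ j (D b) ∘ Del b = fmap RB (fmap NA (tau b)) ∘ j b.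
Proof. rewrite <- cmp_assoc. apply Del_eq. Qed.

Lemma Hjb' b : fmap RB (eA (NB (RB (NA (RA (NB b)))))) ∘ fmap RB (fmap NA (tau b)) ∘ j b
   = hB (RB (NA (RA (NB b)))) ∘ j b.
Proof. destruct (j_eq b) as [H _]. unfold thl in H. exact H. Qed.

Lemma Del_nat a b (f : Hom a b) : fmap D (fmap D f) ∘ Del a = Del b ∘ fmap D f.
Proof.
  apply m_mono. norm.
  rw (Del_eqL b). rwl (j_nat a b f).
  rwF (f_equal (fmap RB) (f_equal (fmap NA) (eq_sym (tau_nat a b f)))).
  rwl (j_nat (D a) (D b) (fmap D f)).
  rwlF (f_equal (fmap RB) (f_equal (fmap NA) (f_equal (fmap RA) (f_equal (fmap NB) (j_nat a b f))))).
  rw (Del_eqL a). reflexivity.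
Qed.

Lemma eps_ok b : hB (RB (NB b)) ∘ (fmap RB (eA (NB b)) ∘ j b) = fmap RB (fmap NB (hB b)) ∘ (fmap RB (eA (NB b)) ∘ j b).
Proof.
  norm.
  rwl (unitN adjB _ _ (fmap RB (eA (NB b)))).
  rwl (Hjb' b).
  rwF (f_equal (fmap RB) (counitN adjA _ _ (fmap NB (fmap RB (eA (NB b)))))).
  rwF (f_equal (fmap RB) (f_equal (fmap NA) (P1 b))).
  rwF (f_equal (fmap RB) (counitN adjA _ _ (fmap NB (hB b)))).
  reflexivity.
Qed.

Definition epss b := eq_factor _ _ _ _ (hB_eq b) (eps_ok b).
Definition eps b : Hom (D b) b := proj1_sig (epss b).
Lemma eps_spec b : hB b ∘ eps b = fmap RB (eA (NB b)) ∘ j b.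
Proof. exact (proj2_sig (epss b)). Qed.

Lemma eps_nat a b (f : Hom a b) : f ∘ eps a = eps b ∘ fmap D f.
Proof.
  apply hB_mono. norm.
  rwl (unitN adjB _ _ f). rw (eps_spec a). rw (eps_spec b).
  rwl (j_nat a b f).
  rwF (f_equal (fmap RB) (counitN adjA _ _ (fmap NB f))). reflexivity.
Qed.

Lemma C2 b : eps (D b) ∘ Del b = idm (D b).
Proof.
  apply hB_mono. apply j2_mono. norm.
  rw (eps_spec (D b)).
  rwF (f_equal (fmap RB) (counitN adjA _ _ (fmap NB (j b)))).
  rw (Del_eqL b). rw (Hjb' b).
  rw (unitN adjB _ _ (j b)). reflexivity.
Qed.

Lemma C1 b : fmap D (eps b) ∘ Del b = idm (D b).
Proof.
  apply j_mono. apply hB4_mono. norm.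
  rwl (j_nat (D b) b (eps b)).
  rwF (f_equal (fmap RB) (f_equal (fmap NA) (f_equal (fmap RA) (f_equal (fmap NB) (eps_spec b))))).
  rw (Del_eqL b).
  rwF (f_equal (fmap RB) (f_equal (fmap NA) (P1 b))). reflexivity.
Qed.

Lemma j8_mono b : mono (fmap RB (fmap NA (fmap RA (fmap NB (fmap RB (fmap NA (fmap RA (fmap NB (j b))))))))).
Proof. exact (eq_mono _ _ _ (pres4 _ _ _ _ _ _ (pres4 _ _ _ _ _ _ (j_eq b)))). Qed.

Lemma C3 b : fmap D (Del b) ∘ Del b = Del (D b) ∘ Del b.
Proof.
  apply j_mono. apply j4_mono. apply j8_mono. norm.
  rwl (j_nat _ _ (Del b)).
  rwF (f_equal (fmap RB) (f_equal (fmap NA) (f_equal (fmap RA) (f_equal (fmap NB) (Del_eqL b))))).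
  rw (Del_eqL b).
  rw (Del_eqL (D b)).
  rwF (f_equal (fmap RB) (f_equal (fmap NA) (tau_nat _ _ (j b)))).
  rw (Del_eqL b).
  rwF (f_equal (fmap RB) (f_equal (fmap NA) (P3 b))). reflexivity.
Qed.


Lemma D_pres : preserves_equalizers D.
Proof.
  intros a b e f g m He.
  pose proof (pres4 _ _ _ _ _ _ He) as He4.
  pose proof (pres6 _ _ _ _ _ _ He) as He6.
  assert (Dm_mono : mono (fmap D m)).
  { intros z p q Hpq. apply (eq_mono _ _ _ (j_eq e)). apply (eq_mono _ _ _ He4).
    rewrite !cmp_assoc, !j_nat, <- !cmp_assoc, Hpq. reflexivity. }
  split.
  - rewrite <- !fmap_cmp. destruct He as [Hfg _]. rewrite Hfg. reflexivity.
  - intros z h Hh.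
    assert (E1 : fmap RB (fmap NA (fmap RA (fmap NB f)))  ∘ (j a ∘ h) = fmap RB (fmap NA (fmap RA (fmap NB g))) ∘ (j a ∘ h)).
    { rewrite !cmp_assoc, !j_nat, <- !cmp_assoc, Hh. reflexivity. }
    destruct (eq_factor _ _ _ _ He4 E1) as [u Hu].
    assert (E2 : thl e ∘ u = hB (RB (NA (RA (NB e)))) ∘ u).
    { apply (eq_mono _ _ _ He6). rewrite !cmp_assoc, thl_nat.
      rewrite (unitN adjB _ _ (fmap RB (fmap NA (fmap RA (fmap NB m))))).
      rewrite <- !cmp_assoc, Hu. destruct (j_eq a) as [Hja _]. rewrite !cmp_assoc, Hja. reflexivity. }
    destruct (eq_factor _ _ _ _ (j_eq e) E2) as [v Hv].
    assert (Hmv : fmap D m ∘ v = h).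
    { apply j_mono. rewrite cmp_assoc, <- j_nat, <- cmp_assoc, Hv. exact Hu. }
    exists v. split; [exact Hmv|].
    intros v' Hv'. apply Dm_mono. rewrite Hv', Hmv. reflexivity.
Qed.

Definition zeta x : Hom (D (RB x)) (RB (NA (RA x))) := fmap RB (fmap NA (fmap RA (eB x))) ∘ j (RB x).

Lemma zeta_nat x y (f : Hom x y) : fmap RB (fmap NA (fmap RA f)) ∘ zeta x = zeta y ∘ fmap D (fmap RB f).
Proof.
  unfold zeta. norm.
  rwF (f_equal (fmap RB) (f_equal (fmap NA) (f_equal (fmap RA) (counitN adjB _ _ f)))).
  rw (j_nat _ _ (fmap RB f)). reflexivity.
Qed.

Lemma A1 x : fmap RB (eA x) ∘ zeta x = eps (RB x).
Proof.
  unfold zeta. norm.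
  rwlF (f_equal (fmap RB) (counitN adjA _ _ (eB x))).
  rwl (eps_spec (RB x)).
  rw (tri2 adjB x). apply cmp_idl.
Qed.

Lemma A2 x : fmap RB (fmap NA (hA (RA x))) ∘ zeta x = zeta (NA (RA x)) ∘ (fmap D (zeta x) ∘ Del (RB x)).
Proof.
  symmetry. unfold zeta at 1. norm.
  rwl (j_nat _ _ (zeta x)). unfold zeta. norm.
  rw (Del_eqL (RB x)).
  rwlF (f_equal (fmap RB) (f_equal (fmap NA) (f_equal (fmap RA) (counitN adjB _ _ (fmap NA (fmap RA (eB x))))))).
  rwF (f_equal (fmap RB) (f_equal (fmap NA) (P2 (RB x)))).
  rwF (f_equal (fmap RB) (f_equal (fmap NA) (unitN adjA _ _ (fmap RA (eB x))))).
  reflexivity.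
Qed.

Lemma Zj b : zeta (NB b) ∘ fmap D (hB b) = j b.
Proof.
  unfold zeta. norm. rwl (j_nat _ _ (hB b)).
  rwF (f_equal (fmap RB) (f_equal (fmap NA) (f_equal (fmap RA) (tri1 adjB b)))).
  norm. reflexivity.
Qed.

Lemma g_ok b :
  fmap NB (thl b) ∘ (eA (NB (RB (NA (RA (NB b))))) ∘ fmap NA (tau b))
  = fmap NB (hB (RB (NA (RA (NB b))))) ∘ (eA (NB (RB (NA (RA (NB b))))) ∘ fmap NA (tau b)).
Proof.
  unfold thl. norm.
  rw (counitN adjA _ _ (fmap NB (fmap RB (fmap NA (tau b))))).
  rw (counitN adjA _ _ (fmap NB (fmap RB (eA (NB (RB (NA (RA (NB b))))))))).
  rwF (f_equal (fmap NA) (G2key b)).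
  rw (counitN adjA _ _ (fmap NB (hB (RB (NA (RA (NB b))))))).
  reflexivity.
Qed.

Lemma coreg b : is_iso (eB (NA (RA (NB b))) ∘ (fmap NB (zeta (NB b)) ∘ fmap NB (fmap D (hB b)))).
Proof.
  rewrite <- fmap_cmp, Zj.
  pose proof (HNB _ _ _ _ _ _ (j_eq b)) as HjN.
  destruct (eq_factor _ _ _ _ HjN (g_ok b)) as [w Hw].
  exists w. split.
  - apply (eq_mono _ _ _ HjN). norm. rw Hw. norm.
    rw (counitN adjB _ _ (eA (NB (RB (NA (RA (NB b)))))  ∘ fmap NA (tau b))). norm.
    rwF (f_equal (fmap NB) (Hjb' b)).
    rw (tri1 adjB (RB (NA (RA (NB b))))). norm. reflexivity.
  - rw Hw. rw (counitN adjA _ _ (eB (NA (RA (NB b))))).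
    rwF (f_equal (fmap NA) (P2 b)). rw (tri1 adjA (RA (NB b))). reflexivity.
Qed.


Lemma part12 : exists (De : Trans D (fun b => D (D b))) (ep : Trans D (fun b => b)),
         natural D (Fcomp D D) De /\ natural D (Fid B) ep /\
         Delta_eq NA RA NB RB tau D j De /\
         eps_eq NA RA NB RB adjA adjB D j ep /\
         (forall De' : Trans D (fun b => D (D b)),
            natural D (Fcomp D D) De' -> Delta_eq NA RA NB RB tau D j De' -> teq De' De) /\
         (forall ep' : Trans D (fun b => b),
            natural D (Fid B) ep' -> eps_eq NA RA NB RB adjA adjB D j ep' -> teq ep' ep) /\
         is_comonad D De ep /\ preserves_equalizers D /\
         coregular_comonad_arrow NA RA NB RB adjA adjB D De ep
           (zeta_can NA RA NB RB adjB D j).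
Proof.
  exists Del, eps.
  unfold Delta_eq, eps_eq, is_comonad, coregular_comonad_arrow, comonad_arrow, zeta_can, zeta_bar,
    NR_Delta, RNRN.
  unf.
  split; [exact Del_nat|].
  split; [exact eps_nat|].
  split; [exact Del_eq|].
  split; [exact eps_spec|].
  split.
  { intros De' _ H b. apply m_mono. rewrite <- !cmp_assoc. rewrite (H b). symmetry. apply Del_eq. }
  split.
  { intros ep' _ H b. apply hB_mono. rewrite (H b). symmetry. apply eps_spec. }
  split.
  { split; [exact Del_nat|]. split; [exact eps_nat|].
    split; [exact C1|]. split; [exact C2|]. exact C3. }
  split; [exact D_pres|].
  split.
  { split; [exact Del_nat|]. split; [exact eps_nat|].
    split; [exact C1|]. split; [exact C2|]. exact C3. }
  split.
  { split; [exact zeta_nat|]. split; [exact A1|]. exact A2. }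
  exact coreg.
Qed.

End Main.

Section Mor.
Context {A B T T' : Category} (F : Functor T' T)
  (NA : Functor A T) (RA : Functor T A) (NB : Functor B T) (RB : Functor T B)
  (adjA : Adjunction NA RA) (adjB : Adjunction NB RB) (tau : tauType NA RA NB RB)
  (NA' : Functor A T') (NB' : Functor B T')
  (adjA' : Adjunction NA' (Fcomp RA F)) (adjB' : Adjunction NB' (Fcomp RB F))
  (tau' : tauType NA' (Fcomp RA F) NB' (Fcomp RB F)).
Hypothesis HB : has_equalizers B.
Hypothesis Ht1 : torsor_hyps NA RA NB RB adjA adjB tau.
Hypothesis Ht2 : torsor_hyps NA' (Fcomp RA F) NB' (Fcomp RB F) adjA' adjB' tau'.
Hypothesis Hmor : pretorsor_morphism F NA RA NB RB adjA adjB NA' NB' adjA' adjB' tau tau'.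

Local Notation hA := (unit adjA).
Local Notation eA := (counit adjA).
Local Notation hB := (unit adjB).
Local Notation eB := (counit adjB).
Local Notation hA' := (unit adjA').
Local Notation eA' := (counit adjA').
Local Notation hB' := (unit adjB').
Local Notation eB' := (counit adjB').
Local Notation aa := (mor_a F NA RA adjA NA' adjA').
Local Notation bb := (mor_b F NB RB adjB NB' adjB').

Lemma hA'N a b (f : Hom a b) : fmap RA (fmap F (fmap NA' f)) ∘ hA' a = hA' b ∘ f.
Proof. exact (unitN adjA' a b f). Qed.
Lemma hB'N a b (f : Hom a b) : fmap RB (fmap F (fmap NB' f)) ∘ hB' a = hB' b ∘ f.
Proof. exact (unitN adjB' a b f). Qed.
Lemma eA'N x y (f : Hom x y) : f ∘ eA' x = eA' y ∘ fmap NA' (fmap RA (fmap F f)).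
Proof. exact (counitN adjA' x y f). Qed.
Lemma eB'N x y (f : Hom x y) : f ∘ eB' x = eB' y ∘ fmap NB' (fmap RB (fmap F f)).
Proof. exact (counitN adjB' x y f). Qed.
Lemma tri2A' w : fmap RA (fmap F (eA' w)) ∘ hA' (RA (F w)) = idm (RA (F w)).
Proof. exact (tri2 adjA' w). Qed.
Lemma tri2B' w : fmap RB (fmap F (eB' w)) ∘ hB' (RB (F w)) = idm (RB (F w)).
Proof. exact (tri2 adjB' w). Qed.
Lemma tri1B' b : eB' (NB' b) ∘ fmap NB' (hB' b) = idm (NB' b).
Proof. exact (tri1 adjB' b). Qed.

Lemma a_nat x y (f : Hom x y) : fmap F (fmap NA' f) ∘ aa x = aa y ∘ fmap NA f.
Proof.
  unfold mor_a, vcomp, rwhisk, lwhisk. norm.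
  rw (counitN adjA _ _ (fmap F (fmap NA' f))).
  rwF (f_equal (fmap NA) (hA'N x y f)). reflexivity.
Qed.
Lemma b_nat x y (f : Hom x y) : fmap F (fmap NB' f) ∘ bb x = bb y ∘ fmap NB f.
Proof.
  unfold mor_b, vcomp, rwhisk, lwhisk. norm.
  rw (counitN adjB _ _ (fmap F (fmap NB' f))).
  rwF (f_equal (fmap NB) (hB'N x y f)). reflexivity.
Qed.
Lemma aeA w : fmap F (eA' w) ∘ aa (RA (F w)) = eA (F w).
Proof.
  unfold mor_a, vcomp, rwhisk, lwhisk. norm.
  rw (counitN adjA _ _ (fmap F (eA' w))).
  rwF (f_equal (fmap NA) (tri2A' w)). apply cmp_idr.
Qed.
Lemma beB w : fmap F (eB' w) ∘ bb (RB (F w)) = eB (F w).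
Proof.
  unfold mor_b, vcomp, rwhisk, lwhisk. norm.
  rw (counitN adjB _ _ (fmap F (eB' w))).
  rwF (f_equal (fmap NB) (tri2B' w)). apply cmp_idr.
Qed.
Lemma bhB c : fmap RB (bb c) ∘ hB c = hB' c.
Proof.
  unfold mor_b, vcomp, rwhisk, lwhisk. norm.
  rw (unitN adjB _ _ (hB' c)).
  rw (tri2 adjB (F (NB' c))). apply cmp_idl.
Qed.

Definition psi b : Hom (NA (RA (NB b))) (F (NA' (RA (F (NB' b))))) :=
  aa (RA (F (NB' b))) ∘ fmap NA (fmap RA (bb b)).

Lemma psi_nat x y (f : Hom x y) :
  fmap F (fmap NA' (fmap RA (fmap F (fmap NB' f)))) ∘ psi x = psi y ∘ fmap NA (fmap RA (fmap NB f)).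
Proof.
  unfold psi. norm. rw (a_nat _ _ (fmap RA (fmap F (fmap NB' f)))).
  rwF (f_equal (fmap NA) (f_equal (fmap RA) (b_nat x y f))). reflexivity.
Qed.

Lemma Hmor' c :
  fmap RA (bb (RB (F (NA' (RA (F (NB' c))))))) ∘ fmap RA (fmap NB (fmap RB (psi c))) ∘ tau c
  = tau' c ∘ fmap RA (bb c).
Proof.
  pose proof (Hmor c) as H. unfold vcomp, lwhisk, hcomp in H. cbn [Fcomp fmap fobj] in H.
  unfold psi. norm. norm_in H. exact H.
Qed.

Lemma psi_def b : psi b = aa (RA (F (NB' b))) ∘ fmap NA (fmap RA (bb b)).
Proof. reflexivity. Qed.
Lemma bb_def x : bb x = eB (F (NB' x)) ∘ fmap NB (hB' x).
Proof. reflexivity. Qed.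
Opaque mor_a mor_b psi.
Lemma claim b :
  fmap F (eA' (NB' (RB (F (NA' (RA (F (NB' b)))))))) ∘ fmap F (fmap NA' (tau' b)) ∘ psi b
  = bb (RB (F (NA' (RA (F (NB' b)))))) ∘ fmap NB (fmap RB (psi b)) ∘ eA (NB (RB (NA (RA (NB b))))) ∘ fmap NA (tau b).
Proof.
  rw (counitN adjA _ _ (fmap NB (fmap RB (psi b)))).
  rw (counitN adjA _ _ (bb (RB (F (NA' (RA (F (NB' b)))))))).
  rwF (f_equal (fmap NA) (Hmor' b)).
  rewrite psi_def. norm.
  rw (a_nat _ _ (tau' b)).
  rw (aeA (NB' (RB (F (NA' (RA (F (NB' b)))))))).
  reflexivity.
Qed.

Context (D : Functor B B) (j : Trans D (fun b => RB (NA (RA (NB b)))))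
        (De : Trans D (fun b => D (D b))) (ep : Trans D (fun b => b))
        (D' : Functor B B) (j' : Trans D' (fun b => RB (F (NA' (RA (F (NB' b)))))))
        (De' : Trans D' (fun b => D' (D' b))) (ep' : Trans D' (fun b => b)).
Hypothesis Hj : is_nat_equalizer D (RNRN NA RA NB RB) (RNRNRN NA RA NB RB)
         (theta_l NA RA NB RB adjA tau) (theta_r NA RA NB RB adjB) j.
Hypothesis HDe : Delta_eq NA RA NB RB tau D j De.
Hypothesis Hep : eps_eq NA RA NB RB adjA adjB D j ep.
Hypothesis Hj' : is_nat_equalizer D' (RNRN NA' (Fcomp RA F) NB' (Fcomp RB F))
         (RNRNRN NA' (Fcomp RA F) NB' (Fcomp RB F))
         (theta_l NA' (Fcomp RA F) NB' (Fcomp RB F) adjA' tau')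
         (theta_r NA' (Fcomp RA F) NB' (Fcomp RB F) adjB') j'.
Hypothesis HDe' : Delta_eq NA' (Fcomp RA F) NB' (Fcomp RB F) tau' D' j' De'.
Hypothesis Hep' : eps_eq NA' (Fcomp RA F) NB' (Fcomp RB F) adjA' adjB' D' j' ep'.

Lemma Htau1 : is_pretorsor NA RA NB RB adjA adjB tau. Proof. apply Ht1. Qed.
Lemma Htau2 : is_pretorsor NA' (Fcomp RA F) NB' (Fcomp RB F) adjA' adjB' tau'. Proof. apply Ht2. Qed.

Lemma j'_eq b : is_equalizer
  (fmap RB (fmap F (eA' (NB' (RB (F (NA' (RA (F (NB' b))))))))) ∘ fmap RB (fmap F (fmap NA' (tau' b))))
  (hB' (RB (F (NA' (RA (F (NB' b))))))) (j' b).
Proof.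
  pose proof (j_eq NA' (Fcomp RA F) NB' (Fcomp RB F) adjA' adjB' tau' HB Htau2 D' j' Hj' b) as H.
  unfold thl in H. cbn [Fcomp fobj fmap] in H. exact H.
Qed.
Lemma j'_mono b : mono (j' b). Proof. exact (eq_mono _ _ _ (j'_eq b)). Qed.
Lemma j'4_mono b : mono (fmap RB (fmap F (fmap NA' (fmap RA (fmap F (fmap NB' (j' b))))))).
Proof.
  destruct Ht2 as [_ [_ [_ [HNA2 HNB2]]]].
  exact (j4_mono NA' (Fcomp RA F) NB' (Fcomp RB F) adjA' adjB' tau' HB Htau2 HNA2 HNB2 D' j' Hj' b).
Qed.
Lemma j'_nat a b (f : Hom a b) :
  fmap RB (fmap F (fmap NA' (fmap RA (fmap F (fmap NB' f))))) ∘ j' a = j' b ∘ fmap D' f.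
Proof. exact (j_nat NA' (Fcomp RA F) NB' (Fcomp RB F) adjA' adjB' tau' D' j' Hj' a b f). Qed.
Lemma hB'_mono b : mono (hB' b).
Proof.
  destruct Ht2 as [_ [_ [HregB2 _]]].
  exact (hB_mono NB' (Fcomp RB F) adjB' HB HregB2 b).
Qed.
Lemma HDe'L b : fmap RB (fmap F (fmap NA' (fmap RA (fmap F (fmap NB' (j' b)))))) ∘ j' (D' b) ∘ De' b
   = fmap RB (fmap F (fmap NA' (tau' b))) ∘ j' b.
Proof. pose proof (HDe' b) as H. unf. rewrite <- cmp_assoc. exact H. Qed.
Lemma Hep'L b : hB' b ∘ ep' b = fmap RB (fmap F (eA' (NB' b))) ∘ j' b.
Proof. pose proof (Hep' b) as H. unf. exact H. Qed.
Lemma HDeL b : fmap RB (fmap NA (fmap RA (fmap NB (j b)))) ∘ j (D b) ∘ De b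
   = fmap RB (fmap NA (tau b)) ∘ j b.
Proof. pose proof (HDe b) as H. unf. rewrite <- cmp_assoc. exact H. Qed.
Lemma HepL b : hB b ∘ ep b = fmap RB (eA (NB b)) ∘ j b.
Proof. pose proof (Hep b) as H. unf. exact H. Qed.
Lemma jnat a b (f : Hom a b) : fmap RB (fmap NA (fmap RA (fmap NB f))) ∘ j a = j b ∘ fmap D f.
Proof. exact (j_nat NA RA NB RB adjA adjB tau D j Hj a b f). Qed.
Lemma Hjb1 b : fmap RB (eA (NB (RB (NA (RA (NB b)))))) ∘ fmap RB (fmap NA (tau b)) ∘ j b
   = hB (RB (NA (RA (NB b)))) ∘ j b.
Proof. exact (Hjb' NA RA NB RB adjA adjB tau HB Htau1 D j Hj b). Qed.

Lemma Phi_ok b :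
  (fmap RB (fmap F (eA' (NB' (RB (F (NA' (RA (F (NB' b))))))))) ∘ fmap RB (fmap F (fmap NA' (tau' b))))
    ∘ (fmap RB (psi b) ∘ j b)
  = hB' (RB (F (NA' (RA (F (NB' b)))))) ∘ (fmap RB (psi b) ∘ j b).
Proof.
  norm. rwF (f_equal (fmap RB) (claim b)).
  rw (Hjb1 b).
  rw (unitN adjB _ _ (fmap RB (psi b))).
  rw (bhB (RB (F (NA' (RA (F (NB' b))))))). reflexivity.
Qed.

Definition ts b := eq_factor _ _ _ _ (j'_eq b) (Phi_ok b).
Definition t b : Hom (D b) (D' b) := proj1_sig (ts b).
Lemma t_spec b : j' b ∘ t b = fmap RB (psi b) ∘ j b.
Proof. exact (proj2_sig (ts b)). Qed.
Opaque t.


Lemma t_nat a b (f : Hom a b) : fmap D' f ∘ t a = t b ∘ fmap D f.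
Proof.
  apply j'_mono. norm.
  rwl (j'_nat a b f). rw (t_spec a).
  rwF (f_equal (fmap RB) (psi_nat a b f)).
  rw (jnat a b f). rw (t_spec b). reflexivity.
Qed.

Lemma eps_key b : fmap F (eA' (NB' b)) ∘ psi b = bb b ∘ eA (NB b).
Proof.
  rewrite psi_def. norm. rw (aeA (NB' b)).
  rwl (counitN adjA _ _ (bb b)). reflexivity.
Qed.

Lemma tM2 b : ep' b ∘ t b = ep b.
Proof.
  apply hB'_mono. norm.
  rw (Hep'L b). rw (t_spec b).
  rwF (f_equal (fmap RB) (eps_key b)).
  rwl (bhB b). rw (HepL b). reflexivity.
Qed.

Lemma delta_key b : fmap F (fmap NA' (tau' b)) ∘ psi b
  = fmap F (fmap NA' (fmap RA (fmap F (fmap NB' (fmap RB (psi b)))))) ∘ psi (RB (NA (RA (NB b)))) ∘ fmap NA (tau b).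
Proof.
  rewrite (psi_def (RB (NA (RA (NB b))))). norm.
  rw (a_nat _ _ (fmap RA (fmap F (fmap NB' (fmap RB (psi b)))))).
  rwF (f_equal (fmap NA) (f_equal (fmap RA) (b_nat _ _ (fmap RB (psi b))))).
  rwF (f_equal (fmap NA) (Hmor' b)).
  rewrite (psi_def b). norm.
  rw (a_nat _ _ (tau' b)). reflexivity.
Qed.

Lemma tM1 b : De' b ∘ t b = t (D' b) ∘ fmap D (t b) ∘ De b.
Proof.
  apply (mono_cmp _ _ (j'4_mono b) (j'_mono (D' b))). norm.
  rw (HDe'L b). rw (t_spec b).
  rw (t_spec (D' b)).
  rwl (jnat _ _ (t b)).
  rwlF (f_equal (fmap RB) (psi_nat _ _ (t b))).
  rwF (f_equal (fmap RB) (f_equal (fmap F) (f_equal (fmap NA') (f_equal (fmap RA) (f_equal (fmap F) (f_equal (fmap NB') (t_spec b))))))).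
  rwF (f_equal (fmap RB) (psi_nat _ _ (j b))).
  rw (HDeL b).
  rwF (f_equal (fmap RB) (delta_key b)). reflexivity.
Qed.

Lemma compat_key y : fmap F (fmap NA' (fmap RA (fmap F (eB' y)))) ∘ psi (RB (F y)) = aa (RA (F y)) ∘ fmap NA (fmap RA (eB (F y))).
Proof.
  rewrite psi_def. norm.
  rw (a_nat _ _ (fmap RA (fmap F (eB' y)))).
  rwF (f_equal (fmap NA) (f_equal (fmap RA) (beB y))). reflexivity.
Qed.

Lemma j'exp b : fmap RB (fmap F (fmap NA' (fmap RA (fmap F (eB' (NB' b)))))) ∘ j' (RB (F (NB' b))) ∘ fmap D' (hB' b) = j' b.
Proof.
  rwl (j'_nat _ _ (hB' b)).
  norm. rwF (f_equal (fmap RB) (f_equal (fmap F) (f_equal (fmap NA') (f_equal (fmap RA) (f_equal (fmap F) (tri1B' b)))))).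
  norm. reflexivity.
Qed.

Definition compat (t' : Trans D D') : Prop :=
  rarr_compat F NA RA RB adjA NA' adjA' D D'
           (zeta_can NA RA NB RB adjB D j)
           (zeta_can NA' (Fcomp RA F) NB' (Fcomp RB F) adjB' D' j') t'.

Lemma compat_t : compat t.
Proof.
  unfold compat, rarr_compat, zeta_can. unf. intros y. norm.
  rw (t_spec (RB (F y))).
  rwF (f_equal (fmap RB) (compat_key y)). reflexivity.
Qed.

Lemma j't' (t' : Trans D D') : natural D D' t' -> compat t' ->
  forall b, j' b ∘ t' b = fmap RB (psi b) ∘ j b.
Proof.
  intros Hn Hc b.
  unfold compat, rarr_compat, zeta_can in Hc. unf.
  rewrite <- (j'exp b). norm.
  rw (Hn _ _ (hB' b)).
  pose proof (Hc (NB' b)) as H. norm_in H.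
  rwl H.
  rwl (jnat _ _ (hB' b)).
  rewrite psi_def, bb_def. norm. reflexivity.
Qed.

Lemma part3 : exists tt : Trans D D',
         comonad_morphism D D' De ep De' ep' tt /\
         compat tt /\
         (forall t' : Trans D D',
            comonad_morphism D D' De ep De' ep' t' ->
            compat t' -> teq t' tt).
Proof.
  exists t. split; [|split].
  - unfold comonad_morphism. unf. split; [exact t_nat|]. split.
    + intros b. rewrite tM1. rewrite <- cmp_assoc. reflexivity.
    + exact tM2.
  - exact compat_t.
  - intros t' [Hn _] Hc b. apply j'_mono.
    rewrite (j't' t' Hn Hc b). symmetry. apply t_spec.
Qed.

End Mor.

Theorem mainTheorem6 :
  (* Parts (1) and (2) *)
  (forall (A B T : Category)
     (NA : Functor A T) (RA : Functor T A) (NB : Functor B T) (RB : Functor T B)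
     (adjA : Adjunction NA RA) (adjB : Adjunction NB RB)
     (tau : tauType NA RA NB RB),
     has_equalizers A -> has_equalizers B ->
     torsor_hyps NA RA NB RB adjA adjB tau ->
     forall (D : Functor B B) (j : Trans D (fun b => RB (NA (RA (NB b))))),
       is_nat_equalizer D (RNRN NA RA NB RB) (RNRNRN NA RA NB RB)
         (theta_l NA RA NB RB adjA tau) (theta_r NA RA NB RB adjB) j ->
       exists (De : Trans D (fun b => D (D b))) (ep : Trans D (fun b => b)),
         (* (1) existence and uniqueness of Delta^D, eps^D *)
         natural D (Fcomp D D) De /\ natural D (Fid B) ep /\
         Delta_eq NA RA NB RB tau D j De /\
         eps_eq NA RA NB RB adjA adjB D j ep /\
         (forall De' : Trans D (fun b => D (D b)),
            natural D (Fcomp D D) De' -> Delta_eq NA RA NB RB tau D j De' -> teq De' De) /\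
         (forall ep' : Trans D (fun b => b),
            natural D (Fid B) ep' -> eps_eq NA RA NB RB adjA adjB D j ep' -> teq ep' ep) /\
         (* (1) D is a comonad whose functor preserves equalizers *)
         is_comonad D De ep /\ preserves_equalizers D /\
         (* (2) (T,(N_B,R_B),(N_A,R_A),D,zeta) is an object of RArr-bar(B,A) *)
         coregular_comonad_arrow NA RA NB RB adjA adjB D De ep
           (zeta_can NA RA NB RB adjB D j))
  /\
  (* Part (3) *)
  (forall (A B T T' : Category) (F : Functor T' T)
     (NA : Functor A T) (RA : Functor T A) (NB : Functor B T) (RB : Functor T B)
     (adjA : Adjunction NA RA) (adjB : Adjunction NB RB)
     (tau : tauType NA RA NB RB)
     (NA' : Functor A T') (NB' : Functor B T')
     (adjA' : Adjunction NA' (Fcomp RA F)) (adjB' : Adjunction NB' (Fcomp RB F))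
     (tau' : tauType NA' (Fcomp RA F) NB' (Fcomp RB F)),
     has_equalizers A -> has_equalizers B ->
     torsor_hyps NA RA NB RB adjA adjB tau ->
     torsor_hyps NA' (Fcomp RA F) NB' (Fcomp RB F) adjA' adjB' tau' ->
     pretorsor_morphism F NA RA NB RB adjA adjB NA' NB' adjA' adjB' tau tau' ->
     forall (D : Functor B B) (j : Trans D (fun b => RB (NA (RA (NB b)))))
            (De : Trans D (fun b => D (D b))) (ep : Trans D (fun b => b))
            (D' : Functor B B) (j' : Trans D' (fun b => RB (F (NA' (RA (F (NB' b)))))))
            (De' : Trans D' (fun b => D' (D' b))) (ep' : Trans D' (fun b => b)),
       is_nat_equalizer D (RNRN NA RA NB RB) (RNRNRN NA RA NB RB)
         (theta_l NA RA NB RB adjA tau) (theta_r NA RA NB RB adjB) j ->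
       natural D (Fcomp D D) De -> natural D (Fid B) ep ->
       Delta_eq NA RA NB RB tau D j De -> eps_eq NA RA NB RB adjA adjB D j ep ->
       is_nat_equalizer D' (RNRN NA' (Fcomp RA F) NB' (Fcomp RB F))
         (RNRNRN NA' (Fcomp RA F) NB' (Fcomp RB F))
         (theta_l NA' (Fcomp RA F) NB' (Fcomp RB F) adjA' tau')
         (theta_r NA' (Fcomp RA F) NB' (Fcomp RB F) adjB') j' ->
       natural D' (Fcomp D' D') De' -> natural D' (Fid B) ep' ->
       Delta_eq NA' (Fcomp RA F) NB' (Fcomp RB F) tau' D' j' De' ->
       eps_eq NA' (Fcomp RA F) NB' (Fcomp RB F) adjA' adjB' D' j' ep' ->
       exists t : Trans D D',
         comonad_morphism D D' De ep De' ep' t /\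
         rarr_compat F NA RA RB adjA NA' adjA' D D'
           (zeta_can NA RA NB RB adjB D j)
           (zeta_can NA' (Fcomp RA F) NB' (Fcomp RB F) adjB' D' j') t /\
         (forall t' : Trans D D',
            comonad_morphism D D' De ep De' ep' t' ->
            rarr_compat F NA RA RB adjA NA' adjA' D D'
              (zeta_can NA RA NB RB adjB D j)
              (zeta_can NA' (Fcomp RA F) NB' (Fcomp RB F) adjB' D' j') t' ->
            teq t' t)).
Proof.
Proof.
  split.
  - intros A B T NA RA NB RB adjA adjB tau HA HB [Htau [HrA [HrB [HNA HNB]]]] D j Hj.
    exact (part12 NA RA NB RB adjA adjB tau HB Htau HrB HNA HNB D j Hj).
  - intros A B T T' F NA RA NB RB adjA adjB tau NA' NB' adjA' adjB' tau' HA HB Ht1 Ht2 Hmor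
      D j De ep D' j' De' ep' Hj _ _ HDe Hep Hj' _ _ HDe' Hep'.
    eapply part3; eassumption.
Qed.
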